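(* Let $V$ be a quasi-regular mixed lattice vector space and $A$ a mixed lattice subspace of $V$. Then the left disjoint complement ${}^{\perp}A$ is a regular specific band in $V$. Moreover, if ${}^{\perp}A$ is an ideal, then it is a regular band.
   Context: A mixed lattice vector space is a real vector space $V$ with two partial orderings $\le$ (initial) and $\preceq$ (specific), each compatible with the vector space structure, such that for all $x,y$ the mixed lower envelope $x\curlywedge y=\max\{w: w\preceq x,\ w\le y\}$ and mixed upper envelope $x\curlyvee y=\min\{w: x\preceq w,\ y\le w\}$ exist (max/min with respect to $\le$). $V_p=\{x:0\le x\}$, $V_{sp}=\{x:0\preceq x\}$, $E_p=E\cap V_p$, $E_{sp}=E\cap V_{sp}$. $V$ is quasi-regular if $V_{sp}$ is closed under $\curlywedge,\curlyvee$. A mixed lattice subspace is a linear subspace closed under $\curlywedge,\curlyvee$; it is regular if $S=S_{sp}-S_{sp}$. An ideal (resp. specific ideal) is a mixed lattice subspace that is $(\le)$-order convex (resp. $(\preceq)$-order convex), where $U$ is $(\le)$-order convex if $x\le z\le y$, $x,y\in U$ imply $z\in U$, and analogously for $\preceq$. A set $E$ is $(\le)$-order closed if $\sup C\in E$ for every nonempty $(\le)$-upwards-directed $C\subseteq E$ whose $\le$-supremum exists in $V$, and $\inf C\in E$ for every nonempty $(\le)$-downwards-directed $C\subseteq E$ whose $\le$-infimum exists in $V$; $(\preceq)$-order closed is defined the same way using $\preceq$-directedness and $\preceq$-suprema/infima. A band is a $(\le)$-order closed ideal; a specific band is a $(\preceq)$-order closed specific ideal. The left disjoint complement ${}^{\perp}A$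 of a mixed lattice subspace $A$ is the smallest specific ideal containing the set $\{x\in V_{sp}: x\curlywedge z=0 \text{ for all } z\in A_p\}$. *)

(* Defs.v *)
From mathcomp Require Import all_boot all_order all_algebra.
From mathcomp Require Import reals.
Set Implicit Arguments. Unset Strict Implicit. Unset Printing Implicit Defensive.
Import Order.TTheory GRing.Theory Num.Theory.
Local Open Scope ring_scope.

(* Subsets of V are predicates V -> Prop. le is the initial order <=,
   sle is the specific order \preceq. *)
Section MixedLattice.
Variables (R : realType) (V : lmodType R).
Variables (le sle : V -> V -> Prop).

Definition partial_order (r : V -> V -> Prop) : Prop :=
  [/\ forall x, r x x,
      forall x y, r x y -> r y x -> x = y &
      forall x y z, r x y -> r y z -> r x z].

Definition vs_compatible (r : V -> V -> Prop) : Prop :=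
  (forall x y z, r x y -> r (x + z) (y + z)) /\
  (forall (a : R) x y, 0 <= a -> r x y -> r (a *: x) (a *: y)).

(* w = x \curlywedge y = max_{<=} { w : w \preceq x, w <= y } *)
Definition is_mlow (x y w : V) : Prop :=
  sle w x /\ le w y /\ (forall u, sle u x -> le u y -> le u w).

(* w = x \curlyvee y = min_{<=} { w : x \preceq w, y <= w } *)
Definition is_mupp (x y w : V) : Prop :=
  sle x w /\ le y w /\ (forall u, sle x u -> le y u -> le w u).

Definition mixed_lattice_vs : Prop :=
  [/\ partial_order le, partial_order sle, vs_compatible le & vs_compatible sle] /\
  (forall x y, exists w, is_mlow x y w) /\
  (forall x y, exists w, is_mupp x y w).

Definition Vp (x : V) : Prop := le 0 x.
Definition Vsp (x : V) : Prop := sle 0 x.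

Definition envelope_closed (E : V -> Prop) : Prop :=
  (forall x y w, E x -> E y -> is_mlow x y w -> E w) /\
  (forall x y w, E x -> E y -> is_mupp x y w -> E w).

Definition quasi_regular : Prop := envelope_closed Vsp.

Definition linear_subspace (S : V -> Prop) : Prop :=
  [/\ S 0, (forall x y, S x -> S y -> S (x + y)) &
      (forall (a : R) x, S x -> S (a *: x))].

Definition mixed_lattice_subspace (S : V -> Prop) : Prop :=
  linear_subspace S /\ envelope_closed S.

Definition regular_subspace (S : V -> Prop) : Prop :=
  mixed_lattice_subspace S /\
  (forall x, S x -> exists u v, [/\ S u, Vsp u, S v, Vsp v & x = u - v]).

Definition order_convex (r : V -> V -> Prop) (U : V -> Prop) : Prop :=
  forall x y z, U x -> U y -> r x z -> r z y -> U z.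

Definition ideal (U : V -> Prop) : Prop :=
  mixed_lattice_subspace U /\ order_convex le U.

Definition specific_ideal (U : V -> Prop) : Prop :=
  mixed_lattice_subspace U /\ order_convex sle U.

Definition up_directed (r : V -> V -> Prop) (C : V -> Prop) : Prop :=
  forall x y, C x -> C y -> exists z, [/\ C z, r x z & r y z].

Definition down_directed (r : V -> V -> Prop) (C : V -> Prop) : Prop :=
  forall x y, C x -> C y -> exists z, [/\ C z, r z x & r z y].

Definition is_sup (r : V -> V -> Prop) (C : V -> Prop) (s : V) : Prop :=
  (forall x, C x -> r x s) /\ (forall u, (forall x, C x -> r x u) -> r s u).

Definition is_inf (r : V -> V -> Prop) (C : V -> Prop) (s : V) : Prop :=
  (forall x, C x -> r s x) /\ (forall u, (forall x, C x -> r u x) -> r u s).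

Definition order_closed (r : V -> V -> Prop) (E : V -> Prop) : Prop :=
  (forall C s, (forall x, C x -> E x) -> (exists x, C x) ->
     up_directed r C -> is_sup r C s -> E s) /\
  (forall C s, (forall x, C x -> E x) -> (exists x, C x) ->
     down_directed r C -> is_inf r C s -> E s).

Definition band (U : V -> Prop) : Prop := ideal U /\ order_closed le U.
Definition specific_band (U : V -> Prop) : Prop :=
  specific_ideal U /\ order_closed sle U.

Definition left_disj_gen (A : V -> Prop) (x : V) : Prop :=
  Vsp x /\ (forall z, A z -> Vp z -> is_mlow x z 0).

Definition left_disj_compl (A : V -> Prop) (x : V) : Prop :=
  forall I, specific_ideal I -> (forall y, left_disj_gen A y -> I y) -> I x.

End MixedLattice.

(* Main.v *)
Require Import Defs.
From mathcomp Require Import all_boot all_order all_algebra.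
From mathcomp Require Import reals.
From Stdlib Require Import FunctionalExtensionality PropExtensionality.
Set Implicit Arguments. Unset Strict Implicit. Unset Printing Implicit Defensive.
Import Order.TTheory GRing.Theory Num.Theory.
Local Open Scope ring_scope.

Section Gen.
Variables (R : realType) (V : lmodType R).

Definition POC (r : V -> V -> Prop) := partial_order r /\ vs_compatible r.

Lemma r_refl r (H : POC r) x : r x x.
Proof. by case: H => [[]]. Qed.
Lemma r_anti r (H : POC r) x y : r x y -> r y x -> x = y.
Proof. by case: H => [[]] _ h _ _; apply: h. Qed.
Lemma r_trans r (H : POC r) x y z : r x y -> r y z -> r x z.
Proof. by case: H => [[]] _ _ h _; apply: h. Qed.
Lemma r_add r (H : POC r) x y z : r x y -> r (x + z) (y + z).
Proof. by case: H => _ [h _]; apply: h. Qed.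
Lemma r_scale r (H : POC r) (a : R) x y : 0 <= a -> r x y -> r (a *: x) (a *: y).
Proof. by case: H => _ [_ h]; apply: h. Qed.
Lemma r_sub r (H : POC r) x y : r x y <-> r 0 (y - x).
Proof.
split=> h; first by have := r_add H (-x) h; rewrite subrr.
by have := r_add H x h; rewrite add0r subrK.
Qed.
Lemma r_s1 r (H : POC r) x y : r x y -> r 0 (y - x).
Proof. by case: (r_sub H x y). Qed.
Lemma r_s2 r (H : POC r) x y : r 0 (y - x) -> r x y.
Proof. by case: (r_sub H x y). Qed.
Lemma r_cone r (H : POC r) a b : r 0 a -> r 0 b -> r 0 (a + b).
Proof.
move=> ha hb; apply: (r_trans H ha).
by have := r_add H a hb; rewrite add0r addrC.
Qed.
Lemma r_opp r (H : POC r) x y : r x y -> r (-y) (-x).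
Proof. by move/(r_sub H)=> h; apply/(r_sub H); rewrite opprK addrC. Qed.

Lemma r_add2 r (H : POC r) a b c d : r a b -> r c d -> r (a + c) (b + d).
Proof.
move=> h1 h2; apply: (r_trans H (r_add H c h1)).
by have := r_add H b h2; rewrite addrC [d + b]addrC.
Qed.

Lemma order_closed_neg r (H : POC r) (E : V -> Prop) :
  (forall x, E x -> E (- x)) ->
  (forall C s, (forall x, C x -> E x) -> (exists x, C x) ->
     up_directed r C -> is_sup r C s -> E s) ->
  order_closed r E.
Proof.
move=> hneg hup; split; first exact: hup.
move=> C s hCE [x0 hx0] hdir [hs1 hs2].
rewrite -[s]opprK; apply: (hneg).
apply: (hup (fun x => C (- x))).
- by move=> x /hCE /hneg; rewrite opprK.
- by exists (- x0); rewrite opprK.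
- move=> x y hx hy; have [z [hz h1 h2]] := hdir _ _ hx hy.
  exists (- z); split; first by rewrite opprK.
  + by rewrite -[x]opprK; apply: r_opp.
  + by rewrite -[y]opprK; apply: r_opp.
- split.
  + by move=> x /hs1 /(r_opp H); rewrite opprK.
  + move=> u hu; rewrite -[u]opprK; apply: (r_opp H); apply: hs2.
    by move=> x hx; rewrite -[x]opprK; apply: (r_opp H); apply: hu; rewrite opprK.
Qed.
End Gen.

Section Main.
Variables (R : realType) (V : lmodType R) (le sle : V -> V -> Prop).
Hypotheses (HV : mixed_lattice_vs le sle) (Hq : quasi_regular le sle).
Variable A : V -> Prop.
Hypothesis HA : mixed_lattice_subspace le sle A.

Lemma Hl : POC le. Proof. by case: HV => [[? ? ? ?] _]; split. Qed.
Lemma Hs : POC sle. Proof. by case: HV => [[? ? ? ?] _]; split. Qed.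
Lemma mlow_ex x y : exists w, is_mlow le sle x y w.
Proof. by case: HV => _ [h _]. Qed.
Lemma mupp_ex x y : exists w, is_mupp le sle x y w.
Proof. by case: HV => _ [_ h]. Qed.

Lemma sle_le x y : sle x y -> le x y.
Proof.
move/(r_sub Hs) => h.
have [w hw] := mlow_ex 0 (y - x).
have h0 : sle 0 w := Hq.1 _ _ _ (r_refl Hs 0) h hw.
case: hw => hw1 [hw2 _].
have w0 : w = 0 := r_anti Hs hw1 h0.
by rewrite w0 in hw2; apply/(r_sub Hl).
Qed.

Lemma mlow_trans x y w t : is_mlow le sle x y w -> is_mlow le sle (x + t) (y + t) (w + t).
Proof.
case=> h1 [h2 h3]; split; first exact: (r_add Hs t h1).
split; first exact: (r_add Hl t h2).
move=> u hu1 hu2.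
have hu1' : sle (u - t) x by have := r_add Hs (-t) hu1; rewrite addrK.
have hu2' : le (u - t) y by have := r_add Hl (-t) hu2; rewrite addrK.
by have := r_add Hl t (h3 _ hu1' hu2'); rewrite subrK.
Qed.

Lemma mupp_neg x y w : is_mupp le sle x y w -> is_mlow le sle (-x) (-y) (-w).
Proof.
case=> h1 [h2 h3]; split; first exact: (r_opp Hs h1).
split; first exact: (r_opp Hl h2).
move=> u hu1 hu2.
have hu1' : sle x (-u) by rewrite -[x]opprK; apply: (r_opp Hs).
have hu2' : le y (-u) by rewrite -[y]opprK; apply: (r_opp Hl).
by rewrite -[u]opprK; apply: (r_opp Hl); apply: h3.
Qed.

Lemma mlow_mupp x y w : is_mlow le sle x y w -> is_mupp le sle 0 (x - y) (x - w).
Proof.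
case=> h1 [h2 h3]; split; first exact: (r_s1 Hs h1).
split.
- apply: (r_s2 Hl).
  have -> : x - w - (x - y) = y - w by rewrite opprB addrC addrA subrK.
  exact: (r_s1 Hl h2).
- move=> u hu1 hu2.
  have e : x - (x - u) = u by rewrite opprB addrC subrK.
  have hu1' : sle (x - u) x by apply: (r_s2 Hs); rewrite e.
  have hu2' : le (x - u) y.
    apply: (r_s2 Hl); move: (r_s1 Hl hu2).
    by have -> : u - (x - y) = y - (x - u) by rewrite !opprB addrCA.
  have hh := r_s1 Hl (h3 _ hu1' hu2'); apply: (r_s2 Hl).
  by have -> : u - (x - w) = w - (x - u) by rewrite !opprB addrCA.
Qed.


Lemma Qlow a b p g : is_mlow le sle a b p -> sle 0 g -> sle (a - b) g -> sle (a - p) g.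
Proof.
move=> h hg hab.
have h' := mlow_trans (g - a) h.
have e1 : a + (g - a) = g by rewrite addrC subrK.
rewrite e1 in h'.
have hb : sle 0 (b + (g - a)).
  by have := r_s1 Hs hab; rewrite opprB addrCA.
have hw : sle 0 (p + (g - a)) := Hq.1 _ _ _ hg hb h'.
by apply: (r_s2 Hs); rewrite opprB addrCA.
Qed.

Lemma Qupp x y w g : is_mupp le sle x y w -> sle 0 g -> sle (y - x) g -> sle (w - x) g.
Proof.
move=> /mupp_neg h hg hyx.
have := Qlow h hg; rewrite !opprK ![- x + _]addrC; apply; exact: hyx.
Qed.

Lemma Split a b p q : is_mlow le sle a b p -> sle b (a + q) -> sle 0 q -> sle (b - p) q.
Proof.
move=> h hb hq.
have h1 : sle 0 (a + q - b) := r_s1 Hs hb.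
have h2 : sle (a - b) (a + q - b).
  by have := r_add Hs (a - b) hq; rewrite add0r addrCA addrA.
have := r_s1 Hs (Qlow h h1 h2) => h3; apply: (r_s2 Hs).
by move: h3; rewrite !opprB addrC addrA addrA subrK [p + q]addrC -addrA.
Qed.

Definition Gs x := sle 0 x /\
  forall z w, A z -> le 0 z -> sle w x -> le w z -> le w 0.

Lemma gen_Gs x : left_disj_gen le sle A x <-> Gs x.
Proof.
split.
- case=> h1 h2; split=> // z w hz hz0 hw1 hw2.
  by case: (h2 z hz hz0) => _ [_ h]; apply: h.
- case=> h1 h2; split=> // z hz hz0; split=> //; split=> // u.
  exact: h2.
Qed.

Lemma Gs0 : Gs 0.
Proof. split; first exact: (r_refl Hs). by move=> z w _ _ hw _; apply: sle_le. Qed.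

Lemma Gs_her y x : sle 0 y -> sle y x -> Gs x -> Gs y.
Proof.
move=> hy hyx [hx hG]; split=> // z w hz hz0 hw1 hw2.
exact: (hG z w hz hz0 (r_trans Hs hw1 hyx) hw2).
Qed.

Lemma le_add0 a b : le a 0 -> le b 0 -> le (a + b) 0.
Proof.
move=> ha hb; apply: (r_trans Hl (r_add Hl b ha)).
by rewrite add0r.
Qed.

Lemma Gs_add x y : Gs x -> Gs y -> Gs (x + y).
Proof.
move=> [hx0 hxG] [hy0 hyG].
have hxy : sle 0 (x + y) := r_cone Hs hx0 hy0.
split=> // z w hz hz0 hw1 hw2.
have [m hm] := mlow_ex (x + y) z.
have [hm1 [hm2 hm3]] := hm.
have hwm := hm3 _ hw1 hw2.
have h0m : le 0 m := hm3 0 hxy hz0.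
have [m1 hn] := mlow_ex x m.
have [hn1 [hn2 hn3]] := hn.
have h0m1 : le 0 m1 := hn3 0 hx0 h0m.
have hm10 : le m1 0 := hxG z m1 hz hz0 hn1 (r_trans Hl hn2 hm2).
have hsp : sle (m - m1) y := Split hn hm1 hy0.
have hle : le (m - m1) z.
  apply: (r_trans Hl _ hm2); apply: (r_s2 Hl).
  by rewrite opprB addrC subrK.
have h2 := hyG z (m - m1) hz hz0 hsp hle.
have := le_add0 hm10 h2; rewrite addrC subrK => hm0.
exact: (r_trans Hl hwm hm0).
Qed.

Lemma Gs_scale (a : R) x : 0 <= a -> Gs x -> Gs (a *: x).
Proof.
move=> ha0 hx; have [->|ha] := eqVneq a 0; first by rewrite scale0r; exact: Gs0.
case: hx => hx0 hxG.
have hb : 0 <= a^-1 by rewrite invr_ge0.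
split; first by have := r_scale Hs ha0 hx0; rewrite scaler0.
move=> z w hz hz0 hw1 hw2.
have hw1' : sle (a^-1 *: w) x.
  by have := r_scale Hs hb hw1; rewrite scalerA mulVf // scale1r.
have hw2' : le (a^-1 *: w) (a^-1 *: z) := r_scale Hl hb hw2.
have hAz : A (a^-1 *: z) by case: HA => [[_ _ hsc] _]; apply: hsc.
have hz0' : le 0 (a^-1 *: z) by have := r_scale Hl hb hz0; rewrite scaler0.
have h := hxG _ _ hAz hz0' hw1' hw2'.
by have := r_scale Hl ha0 h; rewrite scalerA mulfV // scale1r scaler0.
Qed.


Definition Bs x := exists u v, Gs u /\ Gs v /\ x = u - v.

Lemma Bs_G u : Gs u -> Bs u.
Proof. by move=> hu; exists u, 0; split=> //; split; [exact: Gs0|rewrite subr0]. Qed.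

Lemma Bs_add x y : Bs x -> Bs y -> Bs (x + y).
Proof.
case=> [u1 [v1 [hu1 [hv1 ->]]]] [u2 [v2 [hu2 [hv2 ->]]]].
exists (u1 + u2), (v1 + v2); split; first exact: Gs_add.
split; first exact: Gs_add.
by rewrite opprD addrACA.
Qed.

Lemma Bs_neg x : Bs x -> Bs (- x).
Proof.
case=> [u [v [hu [hv ->]]]]; exists v, u; split=> //; split=> //.
by rewrite opprB.
Qed.

Lemma Bs_sub x y : Bs x -> Bs y -> Bs (x - y).
Proof. by move=> hx hy; apply: Bs_add hx (Bs_neg hy). Qed.

Lemma Bs_Ks x : Bs x -> sle 0 x -> Gs x.
Proof.
case=> [u [v [hu [hv ->]]]] h; apply: (Gs_her h _ hu).
apply: (r_s2 Hs); rewrite opprB addrC subrK; exact: hv.1.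
Qed.

Lemma neg_sle a : sle 0 a -> sle (- a) a.
Proof. by move=> h; apply: (r_s2 Hs); rewrite opprK; apply: (r_cone Hs). Qed.

Lemma Bs_bound x : Bs x -> exists g, Gs g /\ sle x g /\ sle (- x) g.
Proof.
case=> [u [v [hu [hv ->]]]]; exists (u + v); split; first exact: Gs_add.
split; first exact: (r_add2 Hs (r_refl Hs u) (neg_sle hv.1)).
rewrite opprB [u + v]addrC.
exact: (r_add2 Hs (r_refl Hs v) (neg_sle hu.1)).
Qed.

Lemma Bs_scale (a : R) x : Bs x -> Bs (a *: x).
Proof.
case=> [u [v [hu [hv ->]]]].
have [ha|ha] := leP 0 a.
  exists (a *: u), (a *: v); split; first exact: Gs_scale.
  split; first exact: Gs_scale.
  by rewrite scalerBr.
have ha' : 0 <= - a by rewrite oppr_ge0 ltW.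
exists ((- a) *: v), ((- a) *: u); split; first exact: Gs_scale.
split; first exact: Gs_scale.
by rewrite scalerBr !scaleNr opprK addrC.
Qed.

Lemma Bs_lin : linear_subspace Bs.
Proof.
split; first exact: (Bs_G Gs0).
- exact: Bs_add.
- by move=> a x; apply: Bs_scale.
Qed.

Lemma Bs_env : envelope_closed le sle Bs.
Proof.
split.
- move=> x y w hx hy hw.
  have [gx [hgx [hxg hnxg]]] := Bs_bound hx.
  have [gy [hgy [hyg hnyg]]] := Bs_bound hy.
  have hgg := Gs_add hgx hgy.
  have hG : Gs (x - w).
    apply: (Gs_her (r_s1 Hs hw.1) _ hgg).
    exact: (Qlow hw hgg.1 (r_add2 Hs hxg hnyg)).
  by have := Bs_sub hx (Bs_G hG); rewrite opprB addrC subrK.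
- move=> x y w hx hy hw.
  have [gx [hgx [hxg hnxg]]] := Bs_bound hx.
  have [gy [hgy [hyg hnyg]]] := Bs_bound hy.
  have hgg := Gs_add hgy hgx.
  have hG : Gs (w - x).
    apply: (Gs_her (r_s1 Hs hw.1) _ hgg).
    exact: (Qupp hw hgg.1 (r_add2 Hs hyg hnxg)).
  by have := Bs_add hx (Bs_G hG); rewrite addrC subrK.
Qed.

Lemma Bs_conv : order_convex sle Bs.
Proof.
move=> x y z hx hy hxz hzy.
have [gx [hgx [hxg hnxg]]] := Bs_bound hx.
have [gy [hgy [hyg hnyg]]] := Bs_bound hy.
have hgg := Gs_add hgy hgx.
have hG : Gs (z - x).
  apply: (Gs_her (r_s1 Hs hxz) _ hgg).
  exact: (r_trans Hs (r_add Hs (-x) hzy) (r_add2 Hs hyg hnxg)).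
by have := Bs_add hx (Bs_G hG); rewrite addrC subrK.
Qed.

Lemma Bs_spec : specific_ideal le sle Bs.
Proof. split; [split; [exact: Bs_lin|exact: Bs_env]|exact: Bs_conv]. Qed.

Lemma L_eq : left_disj_compl le sle A = Bs.
Proof.
apply: functional_extensionality => x; apply: propositional_extensionality; split.
- move=> h; apply: h; first exact: Bs_spec.
  by move=> y /gen_Gs; apply: Bs_G.
- case=> [u [v [hu [hv ->]]]] I hI hgen.
  case: hI => [[[h0 hadd hsc] _] _].
  have hIu := hgen u (proj2 (gen_Gs u) hu).
  have hIv := hgen v (proj2 (gen_Gs v) hv).
  by have := hadd _ _ hIu (hsc (-1) _ hIv); rewrite scaleN1r.
Qed.

Lemma Gs_sup (C : V -> Prop) t : (forall x, C x -> Gs x) -> (exists x, C x) ->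
  is_sup sle C t -> Gs t.
Proof.
move=> hC [c0 hc0] [hs1 hs2].
have ht0 : sle 0 t := r_trans Hs (hC _ hc0).1 (hs1 _ hc0).
split=> // z w hz hz0 hw1 hw2.
have [m hm] := mlow_ex t z; have [hm1 [hm2 hm3]] := hm.
have hwm := hm3 _ hw1 hw2.
have h0m : le 0 m := hm3 0 ht0 hz0.
suff hm0 : le m 0 by exact: (r_trans Hl hwm hm0).
have hub : forall c, C c -> sle c (t - m).
  move=> c hc; have [hc0' hcG] := hC _ hc.
  have [m1 hn] := mlow_ex c m; have [hn1 [hn2 hn3]] := hn.
  have e : m1 = 0 := r_anti Hl (hcG z m1 hz hz0 hn1 (r_trans Hl hn2 hm2)) (hn3 0 hc0' h0m).
  have hct : sle m (c + (t - c)) by rewrite addrC subrK.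
  have := Split hn hct (r_s1 Hs (hs1 _ hc)); rewrite e subr0 => h.
  apply: (r_s2 Hs); move: (r_s1 Hs h); by rewrite addrAC.
have htt := hs2 _ hub.
apply: sle_le; apply: (r_s2 Hs); move: (r_s1 Hs htt); by rewrite addrAC subrr.
Qed.

Lemma Bs_sband : order_closed sle Bs.
Proof.
apply: (order_closed_neg Hs Bs_neg).
move=> C s hCB [c0 hc0] hdir [hs1 hs2].
pose C' := fun x => exists c, C c /\ sle c0 c /\ x = c - c0.
have hG : forall x, C' x -> Gs x.
  move=> x [c [hc [hcc ->]]]; apply: Bs_Ks.
  - exact: Bs_sub (hCB _ hc) (hCB _ hc0).
  - exact: (r_s1 Hs hcc).
have hne : exists x, C' x.
  by exists (c0 - c0), c0; split=> //; split=> //; exact: (r_refl Hs).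
have hsup : is_sup sle C' (s - c0).
  split.
  - move=> x [c [hc [_ ->]]]; exact: (r_add Hs (-c0) (hs1 _ hc)).
  - move=> U hU.
    have : sle s (U + c0).
      apply: hs2 => c hc; have [d [hd h1 h2]] := hdir _ _ hc hc0.
      have h : sle (d - c0) U by apply: hU; exists d.
      have := r_add Hs c0 h; rewrite subrK => h'; exact: (r_trans Hs h1 h').
    by move=> h; have := r_add Hs (-c0) h; rewrite addrK.
by have := Bs_add (Bs_G (Gs_sup hG hne hsup)) (hCB _ hc0); rewrite subrK.
Qed.

Lemma Bs_band : order_convex le Bs -> order_closed le Bs.
Proof.
move=> hconv; apply: (order_closed_neg Hl Bs_neg).
move=> C s hCB [c0 hc0] _ [hs1 hs2].
have [y hy] := mupp_ex 0 s; have [hy1 [hy2 hy3]] := hy.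
have hGy : Gs y.
  split=> // z w hz hz0 hw1 hw2.
  have [m hm] := mlow_ex y z; have [hm1 [hm2 hm3]] := hm.
  have hwm := hm3 _ hw1 hw2.
  suff hm0 : le m 0 by exact: (r_trans Hl hwm hm0).
  have hym := mlow_mupp hm.
  have hsm : le s (y - m).
    apply: hs2 => c hc.
    have [e he] := mupp_ex 0 c; have [he1 [he2 he3]] := he.
    have hBe : Bs e := Bs_env.2 _ _ _ (Bs_G Gs0) (hCB _ hc) he.
    have [_ hGe] := Bs_Ks hBe he1.
    have hez : is_mlow le sle e z 0.
      split=> //; split=> // u hu1 hu2; exact: hGe z u hz hz0 hu1 hu2.
    have hme := mlow_mupp hez; rewrite subr0 in hme.
    have hey : le e y := he3 _ hy1 (r_trans Hl (hs1 _ hc) hy2).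
    have hmon : le e (y - m).
      apply: hme.2.2; first exact: hym.1.
      exact: (r_trans Hl (r_add Hl (-z) hey) hym.2.1).
    exact: (r_trans Hl he2 hmon).
  have hyy := hy3 _ hym.1 hsm.
  apply: (r_s2 Hl); move: (r_s1 Hl hyy); by rewrite addrAC subrr.
exact: (hconv _ _ _ (hCB _ hc0) (Bs_G hGy) (hs1 _ hc0) hy2).
Qed.

Lemma Bs_reg : regular_subspace le sle Bs.
Proof.
split; first by split; [exact: Bs_lin|exact: Bs_env].
move=> x [u [v [hu [hv ->]]]]; exists u, v; split=> //.
- exact: Bs_G.
- exact: hu.1.
- exact: Bs_G.
- exact: hv.1.
Qed.

End Main.

Theorem theorem5p5 (R : realType) (V : lmodType R) (le sle : V -> V -> Prop)
  (HV : mixed_lattice_vs le sle) (Hq : quasi_regular le sle)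
  (A : V -> Prop) (HA : mixed_lattice_subspace le sle A) :
  (regular_subspace le sle (left_disj_compl le sle A) /\
   specific_band le sle (left_disj_compl le sle A)) /\
  (ideal le sle (left_disj_compl le sle A) ->
   regular_subspace le sle (left_disj_compl le sle A) /\
   band le sle (left_disj_compl le sle A)).
Proof.
rewrite (L_eq HV Hq HA).
split.
- split; first exact: Bs_reg.
  split; [exact: Bs_spec|exact: Bs_sband].
- move=> hid; split; first exact: Bs_reg.
  split=> //; apply: Bs_band => //; exact: hid.2.
Qed.
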